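(* Suppose $\mathcal{B}^\#$ is a computable Banach space presentation and $P\subseteq\mathbb{N}^\mathbb{N}$ is $\Pi^0_2$. Then there is a computable operator $F:\mathbb{N}^\mathbb{N}\to\mathbb{N}^\mathbb{N}$ such that for every $f\in\mathbb{N}^\mathbb{N}$, $F(f)$ names $\mathcal{B}^\#$ if $P(f)$ holds, and otherwise $F(f)$ names no Banach space presentation.
   Context: A presentation $\mathcal{B}^\#=(\mathcal{B},R)$ of a Banach space $\mathcal{B}$ has $R:\mathbb{N}\to\mathcal{B}$ with linearly dense range; its rational vectors are finite rational-scalar ($\mathbb{F}\cap\mathbb{Q}(i)$) combinations of the $R(n)$, coded by numbers via a fixed Gödel numbering of formal expressions. With $I_n$ the $n$-th rational open interval in a fixed effective enumeration, the diagram of $\mathcal{B}^\#$ is the set of codes of pairs $(m,n)$ such that the norm of the $m$-th rational vector lies in $I_n$. $\mathcal{B}^\#$ is computable if its diagram is computably enumerable (equivalently, the norm is uniformly computable on rational vectors). A name of $\mathcal{B}^\#$ is any $f\in\mathbb{N}^\mathbb{N}$ whose range is its diagram; $f$ names a Banach space presentation if it names some presentation of some Banach space. $\Pi^0_2$ is in the lightface arithmetical hierarchy on $\mathbb{N}^\mathbb{N}$. *)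

(* Defs.v *)
From HB Require Import structures.
From mathcomp Require Import all_boot all_order all_algebra.
From mathcomp Require Import all_classical all_reals all_analysis.
From mathcomp Require Import complex.
Set Implicit Arguments. Unset Strict Implicit. Unset Printing Implicit Defensive.
Import Order.TTheory GRing.Theory Num.Theory.
Import numFieldNormedType.Exports.
Local Open Scope ring_scope.

Definition Scal (R : realType) (c : bool) : numFieldType :=
  if c then Num.NumField.clone R[i] _ else Num.NumField.clone R _.

Definition qscal (R : realType) (c : bool) : rat * rat -> Scal R c :=
  match c return rat * rat -> Scal R c with
  | true => fun q => (ratr q.1 +i* ratr q.2)%C
  | false => fun q => ratr q.1
  end.

Inductive prf : Type :=
| PZero : prf
| PSucc : prf
| PProj : nat -> prf
| PComp : prf -> seq prf -> prf
| PRec  : prf -> prf -> prf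
| PMin  : prf -> prf.

Inductive eval : prf -> seq nat -> nat -> Prop :=
| eval_zero xs : eval PZero xs 0
| eval_succ x xs : eval PSucc (x :: xs) x.+1
| eval_proj i xs : (i < size xs)%N -> eval (PProj i) xs (nth 0%N xs i)
| eval_comp f gs xs ys y :
    evals gs xs ys -> eval f ys y -> eval (PComp f gs) xs y
| eval_rec0 b s xs y : eval b xs y -> eval (PRec b s) (0%N :: xs) y
| eval_recS b s n xs z y :
    eval (PRec b s) (n :: xs) z -> eval s (n :: z :: xs) y ->
    eval (PRec b s) (n.+1 :: xs) y
| eval_min f xs y :
    eval f (y :: xs) 0 ->
    (forall z, (z < y)%N -> exists w, eval f (z :: xs) w.+1) ->
    eval (PMin f) xs y
with evals : seq prf -> seq nat -> seq nat -> Prop :=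
| evals_nil xs : evals [::] xs [::]
| evals_cons g gs xs y ys :
    eval g xs y -> evals gs xs ys -> evals (g :: gs) xs (y :: ys).

Definition computable1 (h : nat -> nat) : Prop :=
  exists p, forall x, eval p [:: x] (h x).
Definition computable2 (h : nat -> nat -> nat) : Prop :=
  exists p, forall x y, eval p [:: x; y] (h x y).

Definition ce (A : nat -> Prop) : Prop :=
  exists p, forall x, A x <-> exists y, eval p [:: x] y.

Definition init (f : nat -> nat) (m : nat) : nat := pickle (mkseq f m).

Definition Pi02 (P : (nat -> nat) -> Prop) : Prop :=
  exists r : nat -> nat -> nat, computable2 r /\
    forall f, P f <-> forall n, exists m, r n (init f m) <> 0%N.

(* computable (total) operators N^N -> N^N (type-2 computability):
   there is a computable g such that g(f|m, n) is either 0 ("no answer yet")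
   or (F f n).+1, and some finite initial segment of f yields the answer. *)
Definition computable_operator (F : (nat -> nat) -> (nat -> nat)) : Prop :=
  exists g : nat -> nat -> nat, computable2 g /\
    forall f n,
      (forall m, g (init f m) n = 0%N \/ g (init f m) n = (F f n).+1) /\
      (exists m, g (init f m) n = (F f n).+1).

Section Presentations.
Variables (R : realType) (c : bool).
Local Notation K := (Scal R c).

Definition lin_dense (B : completeNormedModType K) (e : nat -> B) : Prop :=
  forall (x : B) (eps : K), 0 < eps ->
    exists s : seq (K * nat), `|x - \sum_(p <- s) p.1 *: e p.2| < eps.

(* fixed Goedel numbering of formal rational linear combinations:
   a formal expression is a finite list of (rational scalar, index) pairs;
   a rational scalar (a, b) denotes a + b i in the complex case and a in
   the real case (so the scalars range over F ∩ Q(i)). *)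
Definition formal_expr (m : nat) : seq ((rat * rat) * nat) :=
  odflt [::] (unpickle m).

Definition rat_vector (B : completeNormedModType K) (e : nat -> B) (m : nat) : B :=
  \sum_(p <- formal_expr m) @qscal R c p.1 *: e p.2.

Definition rat_interval (n : nat) : rat * rat := odflt (0, 0) (unpickle n).

Definition in_rat_interval (x : K) (n : nat) : bool :=
  (ratr (rat_interval n).1 < x) && (x < ratr (rat_interval n).2).

Definition diagram (B : completeNormedModType K) (e : nat -> B) (k : nat) : Prop :=
  exists m n, k = pickle (m, n) /\ in_rat_interval `|rat_vector e m| n.

Definition computable_presentation (B : completeNormedModType K) (e : nat -> B) : Prop :=
  ce (diagram e).

Definition names (B : completeNormedModType K) (e : nat -> B) (f : nat -> nat) : Prop :=
  forall k, (exists i, f i = k) <-> diagram e k.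

Definition names_some_presentation (f : nat -> nat) : Prop :=
  exists (B : completeNormedModType K) (e : nat -> B), lin_dense e /\ names e f.

End Presentations.

(* Main.v *)
From HB Require Import structures.
From mathcomp Require Import all_boot all_order all_algebra.
From mathcomp Require Import all_classical all_reals all_analysis.
From mathcomp Require Import complex.
From Stdlib Require Import Classical.
From Pilot Require Import Defs.
Set Implicit Arguments. Unset Strict Implicit. Unset Printing Implicit Defensive.

Module PilotComp.
Local Open Scope nat_scope.

Definition cmp (k : nat) (F : seq nat -> nat) : Prop :=
  exists p, forall xs, size xs = k -> eval p xs (F xs).

Fixpoint cmps k (Gs : seq (seq nat -> nat)) : Prop :=
  if Gs is G :: Gs' then cmp k G /\ cmps k Gs' else True.

Lemma cmp_ext k F G : (forall xs, size xs = k -> F xs = G xs) -> cmp k F -> cmp k G.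
Proof. move=> e [p hp]; exists p => xs hx; rewrite -e //; exact: hp. Qed.

Lemma cmp_zero k : cmp k (fun _ => 0).
Proof. by exists PZero => xs _; constructor. Qed.

Lemma cmp_proj k i : i < k -> cmp k (fun xs => nth 0 xs i).
Proof. by move=> hi; exists (PProj i) => xs hx; constructor; rewrite hx. Qed.

Lemma cmps_evals k Gs : cmps k Gs ->
  exists gs, forall xs, size xs = k -> evals gs xs [seq G xs | G <- Gs].
Proof.
elim: Gs => [|G Gs IH] /=; first by exists [::] => xs _; constructor.
case=> [[g hg] /IH [gs hgs]]; exists (g :: gs) => xs hx; constructor; auto.
Qed.

Lemma cmp_comp k F Gs : cmp (size Gs) F -> cmps k Gs ->
  cmp k (fun xs => F [seq G xs | G <- Gs]).
Proof.
move=> [f hf] /cmps_evals [gs hgs]; exists (PComp f gs) => xs hx.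
econstructor; first exact: hgs.
by apply: hf; rewrite size_map.
Qed.

Lemma cmp_succ : cmp 1 (fun xs => (nth 0 xs 0).+1).
Proof. by exists PSucc => [[|x [|]]] //= _; constructor. Qed.

Fixpoint natrec (B : seq nat -> nat) (S : seq nat -> nat) (n : nat) (xs : seq nat) : nat :=
  if n is n'.+1 then S (n' :: natrec B S n' xs :: xs) else B xs.

Lemma cmp_rec k B S : cmp k B -> cmp k.+2 S ->
  cmp k.+1 (fun xs => natrec B S (nth 0 xs 0) (behead xs)).
Proof.
move=> [b hb] [s hs]; exists (PRec b s) => [[|n xs]] //= [hx].
elim: n => [|n IH] /=; first by apply: eval_rec0; apply: hb.
apply: eval_recS; first exact: IH.
by apply: hs => /=; rewrite hx.
Qed.

Lemma cmp1 k (op : nat -> nat) A : cmp 1 (fun xs => op (nth 0 xs 0)) -> cmp k A ->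
  cmp k (fun xs => op (A xs)).
Proof. by move=> ho hA; exact: (cmp_comp (F := fun ys => op (nth 0 ys 0)) (Gs := [:: A]) ho (conj hA I)). Qed.

Lemma cmp2 k (op : nat -> nat -> nat) A B : cmp 2 (fun xs => op (nth 0 xs 0) (nth 0 xs 1)) ->
  cmp k A -> cmp k B -> cmp k (fun xs => op (A xs) (B xs)).
Proof. by move=> ho hA hB; exact: (cmp_comp (F := fun ys => op (nth 0 ys 0) (nth 0 ys 1)) (Gs := [:: A; B]) ho (conj hA (conj hB I))). Qed.

Lemma cmp3 k (op : nat -> nat -> nat -> nat) A B C :
  cmp 3 (fun xs => op (nth 0 xs 0) (nth 0 xs 1) (nth 0 xs 2)) ->
  cmp k A -> cmp k B -> cmp k C -> cmp k (fun xs => op (A xs) (B xs) (C xs)).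
Proof. by move=> ho hA hB hC; exact: (cmp_comp (F := fun ys => op (nth 0 ys 0) (nth 0 ys 1) (nth 0 ys 2)) (Gs := [:: A; B; C]) ho (conj hA (conj hB (conj hC I)))). Qed.

Lemma cmp_S k A : cmp k A -> cmp k (fun xs => (A xs).+1).
Proof. exact: (cmp1 (op := succn) cmp_succ). Qed.

Lemma cmp_const k n : cmp k (fun _ => n).
Proof. elim: n => [|n IH]; [exact: cmp_zero | exact: cmp_S]. Qed.

Lemma cmp_add : cmp 2 (fun xs => nth 0 xs 0 + nth 0 xs 1).
Proof.
have h : cmp 2 (fun xs => natrec (fun ys => nth 0 ys 0) (fun ys => (nth 0 ys 1).+1)
                      (nth 0 xs 0) (behead xs)).
  apply: cmp_rec; first exact: cmp_proj.
  by apply: cmp_S; apply: cmp_proj.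
apply: cmp_ext h => [[|n [|m [|]]]] //= _.
by elim: n => //= n ->.
Qed.

Lemma cmp_mul : cmp 2 (fun xs => nth 0 xs 0 * nth 0 xs 1).
Proof.
have h : cmp 2 (fun xs => natrec (fun ys => 0) (fun ys => nth 0 ys 1 + nth 0 ys 2)
                      (nth 0 xs 0) (behead xs)).
  apply: cmp_rec; first exact: cmp_zero.
  by apply: (cmp2 (op := addn) cmp_add); apply: cmp_proj.
apply: cmp_ext h => [[|n [|m [|]]]] //= _.
by elim: n => //= n ->; rewrite mulSn addnC.
Qed.

Lemma cmp_pred : cmp 1 (fun xs => (nth 0 xs 0).-1).
Proof.
have h : cmp 1 (fun xs => natrec (fun ys => 0) (fun ys => nth 0 ys 0)
                      (nth 0 xs 0) (behead xs)).
  apply: cmp_rec; first exact: cmp_zero.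
  by apply: cmp_proj.
apply: cmp_ext h => [[|n [|]]] //= _.
by case: n.
Qed.

Lemma cmp_ifz0 : cmp 3 (fun xs => if nth 0 xs 0 == 0 then nth 0 xs 1 else nth 0 xs 2).
Proof.
have h : cmp 3 (fun xs => natrec (fun ys => nth 0 ys 0) (fun ys => nth 0 ys 3)
                      (nth 0 xs 0) (behead xs)).
  apply: cmp_rec; first exact: cmp_proj.
  by apply: cmp_proj.
apply: cmp_ext h => [[|n [|a [|b [|]]]]] //= _.
by case: n.
Qed.

Lemma cmp_ifz k C A B : cmp k C -> cmp k A -> cmp k B ->
  cmp k (fun xs => if C xs == 0 then A xs else B xs).
Proof. exact: (cmp3 (op := fun c a b => if c == 0 then a else b) cmp_ifz0). Qed.

Lemma cmpA k A B : cmp k A -> cmp k B -> cmp k (fun xs => A xs + B xs).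
Proof. exact: (cmp2 (op := addn) cmp_add). Qed.
Lemma cmpM k A B : cmp k A -> cmp k B -> cmp k (fun xs => A xs * B xs).
Proof. exact: (cmp2 (op := muln) cmp_mul). Qed.
Lemma cmpP k A : cmp k A -> cmp k (fun xs => (A xs).-1).
Proof. exact: (cmp1 (op := predn) cmp_pred). Qed.

Lemma cmps_proj k a b : a + b <= k -> cmps k [seq (fun xs => nth 0 xs i) | i <- iota a b].
Proof.
elim: b a => [|b IH] a //= h; split; first by apply: cmp_proj; rewrite -addn1 (leq_trans _ h) // leq_add2l.
by apply: IH; rewrite addSnnS.
Qed.

Lemma cmps_cat k A B : cmps k A -> cmps k B -> cmps k (A ++ B).
Proof. by elim: A => //= G A IH [] *; split; auto. Qed.


Fixpoint allP (P : prf -> Prop) (gs : seq prf) : Prop :=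
  if gs is g :: gs' then P g /\ allP P gs' else True.

Definition prf_ind2 (P : prf -> Prop) (Hz : P PZero) (Hs : P PSucc)
  (Hp : forall i, P (PProj i))
  (Hc : forall f gs, P f -> allP P gs -> P (PComp f gs))
  (Hr : forall b s, P b -> P s -> P (PRec b s))
  (Hm : forall f, P f -> P (PMin f)) : forall p, P p :=
  fix F p := match p return P p with
   | PZero => Hz | PSucc => Hs | PProj i => Hp i
   | PComp f gs => Hc f gs (F f)
       ((fix G gs := match gs return allP P gs with
                     | [::] => I | g :: gs' => conj (F g) (G gs') end) gs)
   | PRec b s => Hr b s (F b) (F s)
   | PMin f => Hm f (F f) end.

Fixpoint msearch (h : nat -> nat) (t : nat) : nat :=
  if t is t'.+1 then
    let st := msearch h t' in
    if st == 0 then (if h t' == 0 then 1 else if (h t').-1 == 0 then t'.+2 else 0) else st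
  else 0.

Fixpoint recsem (B : nat) (S : nat -> nat -> nat) (n : nat) : nat :=
  if n is n'.+1 then (let z := recsem B S n' in if z == 0 then 0 else S n' z.-1) else B.

Fixpoint bf (p : prf) (s : nat) (xs : seq nat) {struct p} : nat :=
  match p with
  | PZero => 1
  | PSucc => if xs is x :: _ then x.+2 else 0
  | PProj i => if i < size xs then (nth 0 xs i).+1 else 0
  | PComp f gs => let vs := map (fun g => bf g s xs) gs in
        if all (fun v => v != 0) vs then bf f s (map predn vs) else 0
  | PRec b st => if xs is n :: xs' then
        recsem (bf b s xs') (fun j z => bf st s (j :: z :: xs')) n else 0
  | PMin f => (msearch (fun t => bf f s (t :: xs)) s).-1
  end.

Lemma msearch0 h t : msearch h t = 0 -> forall z, z < t -> 2 <= h z.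
Proof.
elim: t => [|t IH] //=; case: eqP => [e|ne].
  case: eqP => // h0; case: eqP => // h1 _ z; rewrite ltnS leq_eqVlt => /orP[/eqP->|].
    by case: (h t) h0 h1 => [|[|]].
  exact: IH.
by move=> e; rewrite e in ne.
Qed.

Lemma msearchS h t y : msearch h t = y.+2 -> [/\ y < t, h y = 1 & forall z, z < y -> 2 <= h z].
Proof.
elim: t => [|t IH] //=; case: eqP => [e|ne].
  case: eqP => // h0; case: eqP => // h1 [<-]; split => //.
    by case: (h t) h0 h1 => [|[|]].
  by move=> z hz; apply: msearch0 e _ _.
by move=> /IH [a b c]; split => //; apply: ltnW.
Qed.

Lemma msearchC h t y : y < t -> h y = 1 -> (forall z, z < y -> 2 <= h z) -> msearch h t = y.+2.
Proof.
move=> yt hy hz; elim: t yt => [|t IH] //.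
rewrite ltnS leq_eqVlt => /orP[/eqP e|lt] /=.
  subst t.
  have -> : msearch h y = 0.
    suff : forall t, t <= y -> msearch h t = 0 by apply.
    elim => [|t IHt] //= ht; rewrite IHt ?(ltnW ht) //= .
    by have := hz t ht; case: (h t) => [|[|]].
  by rewrite hy.
by rewrite IH.
Qed.

Lemma evals_of gs s xs : allP (fun g => forall s xs v, bf g s xs = v.+1 -> eval g xs v) gs ->
  all (fun v => v != 0) [seq bf g s xs | g <- gs] ->
  evals gs xs [seq predn (bf g s xs) | g <- gs].
Proof.
elim: gs => [|g gs IH] /=; first by move=> _ _; constructor.
case=> hg hgs /andP[h0 hr]; constructor; last exact: IH.
case E: (bf g s xs) h0 => [|w] // _; exact: hg E.
Qed.

Lemma bf_sound p s xs v : bf p s xs = v.+1 -> eval p xs v.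
Proof.
elim/prf_ind2: p s xs v.
- by move=> s xs v [<-]; constructor.
- by move=> s [|x xs] v //= [<-]; constructor.
- move=> i s xs v /=; case: ifP => // hi [<-]; by constructor.
- move=> f gs IHf IHgs s xs v /=; case: ifP => // ha hv.
  econstructor; first exact: (evals_of IHgs ha).
  by apply: (IHf s); rewrite -map_comp in hv.
- move=> b st IHb IHs s [|n xs] v //=.
  elim: n v => [|n IH] v /=; first by move=> /IHb h; constructor.
  case: eqP => // ne; case E: (recsem _ _ n) ne => [|z] // _ /= /IHs h.
  by econstructor; [exact: IH E | exact: h].
- move=> f IHf s xs v /=.
  case E: (msearch _ s) => [|[|y]] //= [<-].
  case: (msearchS E) => _ h1 h2; constructor; first exact: IHf h1.
  move=> z /h2; case F: (bf f s (z :: xs)) => [|[|w]] // _.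
  by exists w; apply: IHf F.
Qed.

Lemma bf_mono p s s' xs v : s <= s' -> bf p s xs = v.+1 -> bf p s' xs = v.+1.
Proof.
move=> ss'; elim/prf_ind2: p xs v.
- by [].
- by [].
- by [].
- move=> f gs IHf IHgs xs v /=; case: ifP => // ha hv.
  suff -> : [seq bf g s' xs | g <- gs] = [seq bf g s xs | g <- gs] by rewrite ha; apply: IHf.
  elim: gs IHgs ha {hv} => [|g gs IH] //= [hg hgs] /andP[h0 hr].
  by rewrite IH //; case E: (bf g s xs) h0 => [|w] // _; rewrite (hg _ _ E).
- move=> b st IHb IHs [|n xs] v //=.
  elim: n v => [|n IH] v /=; first exact: IHb.
  case: eqP => // ne; case E: (recsem _ _ n) ne => [|z] // _ /= h.
  by rewrite (IH _ E) /=; apply: IHs.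
- move=> f IHf xs v /=.
  case E: (msearch _ s) => [|[|y]] //= [<-].
  case: (msearchS E) => hy h1 h2.
  rewrite (@msearchC _ s' y) //.
  + exact: leq_trans hy ss'.
  + exact: IHf h1.
  + move=> z /h2; case F: (bf f s (z :: xs)) => [|[|w]] // _.
    by rewrite (IHf _ _ F).
Qed.

Lemma bfs_mono gs s s' xs ys : s <= s' ->
  [seq bf g s xs | g <- gs] = [seq y.+1 | y <- ys] ->
  [seq bf g s' xs | g <- gs] = [seq y.+1 | y <- ys].
Proof.
move=> ss'; elim: gs ys => [|g gs IH] [|y ys] //= [h1 h2].
by rewrite (bf_mono ss' h1) (IH _ h2).
Qed.

Lemma bound_ex (Q : nat -> nat -> Prop) y :
  (forall z s s', s <= s' -> Q z s -> Q z s') ->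
  (forall z, z < y -> exists s, Q z s) -> exists s, forall z, z < y -> Q z s.
Proof.
move=> mono; elim: y => [|y IH] h; first by exists 0.
case: IH => [z hz|s hs]; first by apply: h; apply: ltnW.
case: (h y (ltnSn y)) => s' hs'.
exists (maxn s s') => z; rewrite ltnS leq_eqVlt => /orP[/eqP->|hz].
  by apply: mono hs'; apply: leq_maxr.
by apply: mono (hs _ hz); apply: leq_maxl.
Qed.

Fixpoint bf_complete p xs v (H : eval p xs v) {struct H} : exists s, bf p s xs = v.+1
with bfs_complete gs xs ys (H : evals gs xs ys) {struct H} :
  exists s, [seq bf g s xs | g <- gs] = [seq y.+1 | y <- ys].
Proof.
- case: H.
  + by move=> xs0; exists 0.
  + by move=> x xs0; exists 0.
  + by move=> i xs0 hi; exists 0 => /=; rewrite hi.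
  + move=> f gs xs0 ys y H1 H2.
    case: (bfs_complete _ _ _ H1) => s1 h1; case: (bf_complete _ _ _ H2) => s2 h2.
    exists (maxn s1 s2) => /=.
    rewrite (bfs_mono (leq_maxl s1 s2) h1).
    have -> : all (fun v => v != 0) [seq y.+1 | y <- ys] by elim: ys {h1 H1 h2 H2}.
    rewrite -map_comp map_id_in //.
    exact: bf_mono (leq_maxr s1 s2) h2.
  + move=> b st xs0 y H1; case: (bf_complete _ _ _ H1) => s h; by exists s.
  + move=> b st n xs0 z y H1 H2.
    case: (bf_complete _ _ _ H1) => s1 h1; case: (bf_complete _ _ _ H2) => s2 h2.
    exists (maxn s1 s2) => /=.
    have := bf_mono (leq_maxl s1 s2) h1 => /= ->.
    exact: bf_mono (leq_maxr s1 s2) h2.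
  + move=> f xs0 y H1 H2.
    case: (bf_complete _ _ _ H1) => s1 h1.
    have : forall z, z < y -> exists s, exists w, bf f s (z :: xs0) = w.+2.
      move=> z hz; case: (H2 z hz) => w d; case: (bf_complete _ _ _ d) => s hs.
      by exists s, w.
    case/(bound_ex (Q := fun z s => exists w, bf f s (z :: xs0) = w.+2)).
      by move=> z s s' ss' [w hw]; exists w; apply: bf_mono ss' hw.
    move=> s2 hs2.
    exists (maxn (maxn s1 s2) y.+1) => /=.
    rewrite (@msearchC _ _ y) //.
    * by apply: leq_trans (leq_maxr _ _).
    * by apply: bf_mono h1; rewrite leq_max leq_maxl.
    * move=> z /hs2 [w hw]; rewrite (@bf_mono f s2 _ _ _ _ hw) //.
      by rewrite !leq_max leqnn !orbT.
- case: H.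
  + by move=> xs0; exists 0.
  + move=> g gs0 xs0 y ys0 H1 H2.
    case: (bf_complete _ _ _ H1) => s1 h1; case: (bfs_complete _ _ _ H2) => s2 h2.
    exists (maxn s1 s2) => /=.
    by rewrite (bf_mono (leq_maxl s1 s2) h1) (bfs_mono (leq_maxr s1 s2) h2).
Qed.


Fixpoint prodl (l : seq nat) : nat := if l is a :: l' then a * prodl l' else 1.

Lemma prodl_all l : (prodl l != 0) = all (fun v => v != 0) l.
Proof. by elim: l => //= a l <-; rewrite muln_eq0 negb_or. Qed.

Lemma cmp_prodl k Gs : cmps k Gs -> cmp k (fun xs => prodl [seq G xs | G <- Gs]).
Proof.
elim: Gs => [|G Gs IH] /=; first by move=> _; apply: cmp_const.
by case=> hG /IH h; apply: cmpM.
Qed.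

Lemma cmps_map1 k Gs (op : nat -> nat) : cmp 1 (fun xs => op (nth 0 xs 0)) -> cmps k Gs ->
  cmps k [seq (fun xs => op (G xs)) | G <- Gs].
Proof.
move=> ho; elim: Gs => //= G Gs IH [hG hGs]; split; last exact: IH.
exact: (cmp1 (op := op)).
Qed.

Lemma projs_eval l a b : size l = a + b ->
  [seq G l | G <- [seq (fun xs => nth 0 xs i) | i <- iota a b]] = drop a l.
Proof.
move=> hl; rewrite -map_comp /= map_nth_iota; last by rewrite hl addKn.
by rewrite take_oversize // size_drop hl addKn.
Qed.

Lemma cmp_bf p k : cmp k.+1 (fun sx => bf p (nth 0 sx 0) (behead sx)).
Proof.
elim/prf_ind2: p k.
- by move=> k; apply: cmp_const.
- case=> [|k].
    by apply: cmp_ext (cmp_const 1 0) => [[|s [|]]].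
  apply: cmp_ext (cmp_S (cmp_S (@cmp_proj k.+2 1 isT))) => [[|s [|x xs]]] //.
- move=> i k; case: (ltnP i k) => hik.
    apply: cmp_ext (cmp_S (@cmp_proj k.+1 i.+1 hik)) => [[|s xs]] //= [->].
    by rewrite hik.
  apply: cmp_ext (cmp_const _ 0) => [[|s xs]] //= [e].
  by rewrite e ltnNge hik.
- move=> f gs IHf IHgs k.
  pose Gs := [seq (fun sx => bf g (nth 0 sx 0) (behead sx)) | g <- gs].
  have hGs : cmps k.+1 Gs.
    rewrite /Gs; clear Gs; elim: gs IHgs => //= g gs IH [hg hgs]; split; [apply: hg | apply: IH]; done.
  pose L := (fun sx => nth 0 sx 0) :: [seq (fun xs => (G xs).-1) | G <- Gs].
  have hL : cmps k.+1 L.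
    by split; [exact: cmp_proj | exact: (cmps_map1 cmp_pred hGs)].
  have hF : cmp (size L) (fun sx => bf f (nth 0 sx 0) (behead sx)).
    by rewrite /= !size_map; exact: IHf.
  have hE := cmp_comp hF hL.
  have hC := cmp_prodl hGs.
  have := cmp_ifz hC (cmp_const _ 0) hE.
  apply: cmp_ext => sx _ /=.
  have eG : [seq G sx | G <- Gs] = [seq bf g (nth 0 sx 0) (behead sx) | g <- gs] by rewrite -map_comp.
  rewrite eG -prodl_all; case: eqP => //= _.
  by rewrite -!map_comp.
- move=> b st IHb IHs [|k].
    by apply: cmp_ext (cmp_const 1 0) => [[|s [|]]].
  pose Ls := [:: (fun ys => nth 0 ys 2), (fun ys => nth 0 ys 0), (fun ys => (nth 0 ys 1).-1) &
                          [seq (fun xs => nth 0 xs i) | i <- iota 3 k]].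
  have hLs : cmps k.+3 Ls.
    split; first exact: cmp_proj.
    split; first exact: cmp_proj.
    split; first exact: cmpP (cmp_proj _).
    exact: cmps_proj.
  have hFs : cmp (size Ls) (fun zs => bf st (nth 0 zs 0) (behead zs)).
    by rewrite /= size_map size_iota; exact: (IHs k.+2).
  have hS := cmp_ifz (@cmp_proj k.+3 1 isT) (cmp_const _ 0) (cmp_comp hFs hLs).
  have hR := cmp_rec (IHb k) hS.
  pose L2 := [:: (fun ys => nth 0 ys 1), (fun ys => nth 0 ys 0) &
                          [seq (fun xs => nth 0 xs i) | i <- iota 2 k]].
  have hL2 : cmps k.+2 L2.
    by split; [exact: cmp_proj | split; [exact: cmp_proj | exact: cmps_proj]].
  have hR' : cmp (size L2) (fun xs => natrec (fun sx => bf b (nth 0 sx 0) (behead sx))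
     (fun ys => if nth 0 ys 1 == 0 then 0 else bf st (nth 0 [seq G ys | G <- Ls] 0) (behead [seq G ys | G <- Ls]))
     (nth 0 xs 0) (behead xs)).
    by rewrite /= size_map size_iota.
  have := cmp_comp hR' hL2.
  apply: cmp_ext => [[|s [|n xs]]] //= [hx].
  rewrite (@projs_eval [:: s, n & xs] 2 k); last by rewrite /= hx.
  rewrite /= drop0.
  elim: n => //= n ->.
  case: eqP => //= _.
  by rewrite (@projs_eval [:: n, _, s & xs] 3 k) /= ?drop0 // hx.
- move=> f IHf k.
  pose Lm := [:: (fun ys => nth 0 ys 2), (fun ys => nth 0 ys 0) &
                          [seq (fun xs => nth 0 xs i) | i <- iota 3 k]].
  have hLm : cmps k.+3 Lm.
    split; first exact: cmp_proj.
    split; first exact: cmp_proj.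
    exact: cmps_proj.
  have hFm : cmp (size Lm) (fun zs => bf f (nth 0 zs 0) (behead zs)).
    by rewrite /= size_map size_iota; exact: (IHf k.+1).
  have hF := cmp_comp hFm hLm.
  have hSm := cmp_ifz (@cmp_proj k.+3 1 isT)
     (cmp_ifz hF (cmp_const _ 1) (cmp_ifz (cmpP hF) (cmp_S (cmp_S (@cmp_proj k.+3 0 isT))) (cmp_const _ 0)))
     (@cmp_proj k.+3 1 isT).
  have hM := cmp_rec (cmp_const k.+1 0) hSm.
  pose L2 := [:: (fun ys => nth 0 ys 0), (fun ys => nth 0 ys 0) &
                          [seq (fun xs => nth 0 xs i) | i <- iota 1 k]].
  have hL2 : cmps k.+1 L2.
    by split; [exact: cmp_proj | split; [exact: cmp_proj | exact: cmps_proj]].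
  have hM' : cmp (size L2) (fun xs => natrec (fun _ => 0) (fun zs => if nth 0 zs 1 == 0 then
      (if bf f (nth 0 [seq G zs | G <- Lm] 0) (behead [seq G zs | G <- Lm]) == 0 then 1
       else if (bf f (nth 0 [seq G zs | G <- Lm] 0) (behead [seq G zs | G <- Lm])).-1 == 0
            then (nth 0 zs 0).+2 else 0) else nth 0 zs 1)
     (nth 0 xs 0) (behead xs)).
    by rewrite /= size_map size_iota.
  have := cmpP (cmp_comp hM' hL2).
  apply: cmp_ext => [[|s xs]] //= [hx].
  rewrite (@projs_eval [:: s & xs] 1 k); last by rewrite /= hx.
  rewrite /= drop0.
  congr predn.
  elim: s {2 3}s => //= t IH s.
  by rewrite IH (@projs_eval [:: t, _, s & xs] 3 k) /= ?drop0 // hx.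
Qed.


Lemma cmp_iter (op : nat -> nat) : cmp 1 (fun xs => op (nth 0 xs 0)) ->
  cmp 2 (fun xs => iter (nth 0 xs 0) op (nth 0 xs 1)).
Proof.
move=> ho.
have h := cmp_rec (@cmp_proj 1 0 isT) (cmp1 ho (@cmp_proj 3 1 isT)).
apply: cmp_ext h => [[|n [|u [|]]]] //= _.
by elim: n => //= n ->.
Qed.

Fixpoint bmin (h : nat -> nat) t :=
  if t is t'.+1 then let b := bmin h t' in
    if t' - b == 0 then (if h t' == 0 then t'.+1 else t') else b
  else 0.

Lemma bmin_none h t : (forall i, i < t -> h i = 0) -> bmin h t = t.
Proof.
elim: t => //= t IH hi; rewrite IH; last by move=> i it; apply: hi; apply: ltnW.
by rewrite subnn eqxx hi.
Qed.

Lemma bmin_eq h t y : (forall i, i < y -> h i = 0) -> h y != 0 -> y < t -> bmin h t = y.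
Proof.
move=> h0 hy; elim: t => // t IH; rewrite ltnS leq_eqVlt => /orP[/eqP e|lt] /=.
  subst t; rewrite bmin_none // subnn eqxx; by case: eqP hy => // ->.
by rewrite IH // subn_eq0 leqNgt lt.
Qed.

Lemma cmp_sub : cmp 2 (fun xs => nth 0 xs 0 - nth 0 xs 1).
Proof.
have h := cmp_comp (cmp_iter cmp_pred) (Gs := [:: (fun xs => nth 0 xs 1); (fun xs => nth 0 xs 0)])
   (conj (@cmp_proj 2 1 isT) (conj (@cmp_proj 2 0 isT) I)).
apply: cmp_ext h => [[|a [|b [|]]]] //= _.
elim: b => [|b IH] /=; [by rewrite subn0 | by rewrite IH subnS].
Qed.

Lemma cmpB k A B : cmp k A -> cmp k B -> cmp k (fun xs => A xs - B xs).
Proof. exact: (cmp2 (op := subn) cmp_sub). Qed.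

Lemma cmp_bmin k Hf : cmp k.+1 Hf ->
  cmp k.+1 (fun xs => bmin (fun i => Hf (i :: behead xs)) (nth 0 xs 0)).
Proof.
move=> hH.
pose L := [:: (fun ys : seq nat => nth 0 ys 0) & [seq (fun xs => nth 0 xs i) | i <- iota 2 k]].
have hL : cmps k.+2 L by split; [exact: cmp_proj | exact: cmps_proj].
have hF : cmp (size L) Hf by rewrite /= size_map size_iota.
have hS := cmp_ifz (cmpB (@cmp_proj k.+2 0 isT) (@cmp_proj k.+2 1 isT))
     (cmp_ifz (cmp_comp hF hL) (cmp_S (@cmp_proj k.+2 0 isT)) (@cmp_proj k.+2 0 isT))
     (@cmp_proj k.+2 1 isT).
have := cmp_rec (cmp_const k 0) hS.
apply: cmp_ext => [[|t xs]] //= [hx].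
elim: t => //= t ->.
by rewrite (@projs_eval [:: t, _ & xs] 2 k) /= ?drop0 // hx.
Qed.

Fixpoint sumf (h : nat -> nat) t := if t is t'.+1 then sumf h t' + h t' else 0.

Lemma sumf_eq0 h t : (sumf h t == 0) = [forall i : 'I_t, h i == 0].
Proof.
elim: t => [|t IH] /=; first by apply/esym/forallP; case.
rewrite addn_eq0 IH; apply/andP/forallP => [[/forallP h1 h2] i|h1].
  case: (ltnP i t) => [it|ti]; first exact: (h1 (Ordinal it)).
  by have -> : nat_of_ord i = t by apply/eqP; rewrite eqn_leq ti -ltnS ltn_ord.
split; last exact: (h1 ord_max).
by apply/forallP => i; exact: (h1 (widen_ord (leqnSn t) i)).
Qed.

Lemma sumf_eq0P h t : sumf h t = 0 <-> forall i, i < t -> h i = 0.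
Proof.
split.
  move/eqP; rewrite sumf_eq0 => /forallP hi i it; apply/eqP; exact: (hi (Ordinal it)).
by move=> hi; apply/eqP; rewrite sumf_eq0; apply/forallP => i; apply/eqP/hi.
Qed.

Lemma cmp_sumf k Hf : cmp k.+1 Hf ->
  cmp k.+1 (fun xs => sumf (fun i => Hf (i :: behead xs)) (nth 0 xs 0)).
Proof.
move=> hH.
pose L := [:: (fun ys : seq nat => nth 0 ys 0) & [seq (fun xs => nth 0 xs i) | i <- iota 2 k]].
have hL : cmps k.+2 L by split; [exact: cmp_proj | exact: cmps_proj].
have hF : cmp (size L) Hf by rewrite /= size_map size_iota.
have hS := cmpA (@cmp_proj k.+2 1 isT) (cmp_comp hF hL).
have := cmp_rec (cmp_const k 0) hS.
apply: cmp_ext => [[|t xs]] //= [hx].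
elim: t => //= t ->.
by rewrite (@projs_eval [:: t, _ & xs] 2 k) /= ?drop0 // hx.
Qed.

Lemma cmp_odd : cmp 1 (fun xs => odd (nth 0 xs 0)).
Proof.
have h := cmp_rec (cmp_const 0 0) (cmp_ifz (@cmp_proj 2 1 isT) (cmp_const 2 1) (cmp_const 2 0)).
apply: cmp_ext h => [[|n [|]]] //= _.
by elim: n => //= n ->; case: (odd n).
Qed.

Lemma cmp_half : cmp 1 (fun xs => (nth 0 xs 0)./2).
Proof.
have h := cmp_rec (cmp_const 0 0) (cmpA (@cmp_proj 2 1 isT) (cmp1 (op := fun x => nat_of_bool (odd x)) cmp_odd (@cmp_proj 2 0 isT))).
apply: cmp_ext h => [[|n [|]]] //= _.
by elim: n => //= n ->; rewrite uphalf_half addnC.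
Qed.

Lemma cmp_exp2 : cmp 1 (fun xs => 2 ^ (nth 0 xs 0)).
Proof.
have h := cmp_rec (cmp_const 0 1) (cmpA (@cmp_proj 2 1 isT) (@cmp_proj 2 1 isT)).
apply: cmp_ext h => [[|n [|]]] //= _.
by elim: n => //= n ->; rewrite expnS mul2n addnn.
Qed.


Definition val2 u := bmin (fun k => odd (iter k half u)) u.
Definition tl u := (iter (val2 u) half u)./2.
Definition tli i u := iter i tl u.
Definition ccons x c := 2 ^ x * c.*2.+1.
Fixpoint pfxr u j t := if t is t'.+1 then ccons (val2 (tli (j - t) u)) (pfxr u j t') else 0.
Definition pfx u j := pfxr u j j.

Lemma iter_half x m k : k <= x -> iter k half (2 ^ x * m) = 2 ^ (x - k) * m.
Proof.
elim: k => [|k IH] hk /=; first by rewrite subn0.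
rewrite IH ?(ltnW hk) //.
have -> : x - k = (x - k.+1).+1 by rewrite subnS prednK // subn_gt0.
by rewrite expnS -mulnA mul2n doubleK.
Qed.

Lemma val2_cons x c : val2 (ccons x c) = x.
Proof.
rewrite /val2 /ccons; apply: bmin_eq.
- move=> i ix; rewrite iter_half ?(ltnW ix) // oddM oddX.
  by rewrite subn_eq0 leqNgt ix.
- by rewrite iter_half // subnn expn0 mul1n oddS odd_double.
- apply: leq_trans (ltn_expl x (ltnSn 1)) _.
  by rewrite leq_pmulr.
Qed.

Lemma tl_cons x c : tl (ccons x c) = c.
Proof.
rewrite /tl val2_cons /ccons iter_half // subnn expn0 mul1n.
by rewrite -[c.*2.+1]/(true + c.*2) half_bit_double.
Qed.

Definition code := CodeSeq.code.

Lemma code_cons x s : code (x :: s) = ccons x (code s).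
Proof. by []. Qed.

Lemma ccons_gt0 x c : 0 < ccons x c.
Proof. by rewrite /ccons muln_gt0 expn_gt0. Qed.

Lemma code_eq0 s : (code s == 0) = (s == [::]).
Proof. by case: s => [|x s] //; rewrite code_cons eqn0Ngt ccons_gt0. Qed.

Lemma tl_code s : tl (code s) = code (behead s).
Proof. by case: s => // x s; rewrite code_cons tl_cons. Qed.

Lemma tli_code i s : tli i (code s) = code (drop i s).
Proof.
elim: i => [|i IH]; first by rewrite drop0.
rewrite /tli /= -/(tli i _) IH tl_code.
congr code; elim: s i {IH} => [|x s IHs] [|i] //=; by rewrite ?drop0 ?IHs.
Qed.

Lemma val2_code s i : i < size s -> val2 (tli i (code s)) = nth 0 s i.
Proof. by move=> hi; rewrite tli_code (drop_nth 0 hi) code_cons val2_cons. Qed.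

Lemma pfxr_code s j t : t <= j -> j <= size s -> pfxr (code s) j t = code (take t (drop (j - t) s)).
Proof.
move=> tj js; elim: t tj => [|t IH] tj /=; first by rewrite take0.
have hlt : j - t.+1 < size s.
  by apply: leq_trans js; rewrite ltn_subrL /= (leq_trans _ tj).
rewrite IH; last exact: ltnW.
rewrite val2_code // (drop_nth 0 hlt) [take t.+1 _]/= code_cons.
by have -> : (j - t.+1).+1 = j - t by rewrite subnS prednK // subn_gt0.
Qed.

Lemma pfx_code s j : j <= size s -> pfx (code s) j = code (take j s).
Proof. by move=> js; rewrite /pfx pfxr_code // subnn drop0. Qed.

Lemma cmp_val2 : cmp 1 (fun xs => val2 (nth 0 xs 0)).
Proof.
have h1 : cmp 2 (fun xs => odd (iter (nth 0 xs 0) half (nth 0 xs 1))).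
  exact: (cmp1 (op := fun x => nat_of_bool (odd x)) cmp_odd (cmp_iter cmp_half)).
have h2 := cmp_bmin h1.
have := cmp_comp h2 (Gs := [:: (fun xs => nth 0 xs 0); (fun xs => nth 0 xs 0)])
   (conj (@cmp_proj 1 0 isT) (conj (@cmp_proj 1 0 isT) I)).
by apply: cmp_ext => [[|u [|]]].
Qed.

Lemma cmp_tl : cmp 1 (fun xs => tl (nth 0 xs 0)).
Proof.
have := cmp_comp (cmp_iter cmp_half) (Gs := [:: (fun xs => val2 (nth 0 xs 0)); (fun xs => nth 0 xs 0)])
   (conj cmp_val2 (conj (@cmp_proj 1 0 isT) I)).
move/(cmp1 (op := half) cmp_half).
by apply: cmp_ext => [[|u [|]]].
Qed.

Lemma cmp_tli : cmp 2 (fun xs => tli (nth 0 xs 0) (nth 0 xs 1)).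
Proof. exact: (cmp_iter cmp_tl). Qed.

Lemma cmp_ccons : cmp 2 (fun xs => ccons (nth 0 xs 0) (nth 0 xs 1)).
Proof.
have := cmpM (cmp1 (op := fun x => 2 ^ x) cmp_exp2 (@cmp_proj 2 0 isT))
   (cmp_S (cmpA (@cmp_proj 2 1 isT) (@cmp_proj 2 1 isT))).
by apply: cmp_ext => [[|a [|b [|]]]] //= _; rewrite /ccons addnn.
Qed.

Lemma cmp_pfx : cmp 2 (fun xs => pfx (nth 0 xs 0) (nth 0 xs 1)).
Proof.
(* S (t' :: c :: u :: j) = ccons (val2 (tli (j - t'.+1) u)) c *)
have hT : cmp 4 (fun ys => tli (nth 0 ys 3 - (nth 0 ys 0).+1) (nth 0 ys 2)).
  exact: (cmp2 (op := tli) cmp_tli (cmpB (@cmp_proj 4 3 isT) (cmp_S (@cmp_proj 4 0 isT))) (@cmp_proj 4 2 isT)).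
have hS : cmp 4 (fun ys => ccons (val2 (tli (nth 0 ys 3 - (nth 0 ys 0).+1) (nth 0 ys 2))) (nth 0 ys 1)).
  exact: (cmp2 (op := ccons) cmp_ccons (cmp1 (op := val2) cmp_val2 hT) (@cmp_proj 4 1 isT)).
have hR := cmp_rec (cmp_const 2 0) hS.
have := cmp_comp hR (Gs := [:: (fun xs => nth 0 xs 1); (fun xs => nth 0 xs 0); (fun xs => nth 0 xs 1)])
   (conj (@cmp_proj 2 1 isT) (conj (@cmp_proj 2 0 isT) (conj (@cmp_proj 2 1 isT) I))).
apply: cmp_ext => [[|u [|j [|]]]] //= _.
rewrite /pfx; elim: {1 4}j => //= t ->.
done.
Qed.


Lemma cmp_of2 (r : nat -> nat -> nat) : computable2 r -> cmp 2 (fun xs => r (nth 0 xs 0) (nth 0 xs 1)).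
Proof. by move=> [p hp]; exists p => [[|a [|b [|]]]] //= _; apply: hp. Qed.

Lemma to2 (g : nat -> nat -> nat) : cmp 2 (fun xs => g (nth 0 xs 0) (nth 0 xs 1)) -> computable2 g.
Proof. by move=> [p hp]; exists p => x y; apply: (hp [:: x; y]). Qed.

Definition enumD p0 x0 t := if bf p0 t [:: val2 t] == 0 then x0 else val2 t.

Lemma cmp_enumD p0 x0 : cmp 1 (fun xs => enumD p0 x0 (nth 0 xs 0)).
Proof.
have hB := cmp_comp (cmp_bf p0 1) (Gs := [:: (fun xs => nth 0 xs 0); (fun xs => val2 (nth 0 xs 0))])
   (conj (@cmp_proj 1 0 isT) (conj cmp_val2 I)).
have := cmp_ifz hB (cmp_const 1 x0) cmp_val2.
by apply: cmp_ext => [[|t [|]]].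
Qed.

Lemma enumD_range (A : nat -> Prop) p0 x0 : (forall x, A x <-> exists y, eval p0 [:: x] y) -> A x0 ->
  forall k, (exists t, enumD p0 x0 t = k) <-> A k.
Proof.
move=> hA hx0 k; split.
  case=> t <-; rewrite /enumD; case E: (bf p0 t _) => [|w] //=.
  by apply/hA; exists w; apply: bf_sound E.
move/hA => [y /bf_complete [s hs]].
exists (ccons k s); rewrite /enumD val2_cons.
rewrite (@bf_mono p0 s (ccons k s) _ y) //.
have h2 : 0 < 2 ^ k by rewrite expn_gt0.
rewrite /ccons; apply: leq_trans (leq_pmull _ h2).
by apply: leq_trans (leqnSn _); rewrite -addnn leq_addr.
Qed.

Section Op.
Variables (r : nat -> nat -> nat) (p0 : prf) (x0 : nat).

Definition Wf u c m := sumf (fun i => r c (pfx u i)) m.+1.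
Fixpoint cnt u m := if m is m'.+1 then let c := cnt u m' in if Wf u c m' == 0 then c else c.+1 else 0.
Definition gop u n := if tli n u == 0 then 0 else (enumD p0 x0 (cnt u n)).+1.
Fixpoint Cf f m := if m is m'.+1 then let c := Cf f m' in
   if sumf (fun i => r c (code (mkseq f i))) m'.+1 == 0 then c else c.+1 else 0.
Definition Fop f n := enumD p0 x0 (Cf f n).

Lemma cmp_gop : computable2 r -> cmp 2 (fun xs => gop (nth 0 xs 0) (nth 0 xs 1)).
Proof.
move=> /cmp_of2 hr.
have hH : cmp 3 (fun ys => r (nth 0 ys 1) (pfx (nth 0 ys 2) (nth 0 ys 0))).
  exact: (cmp2 (op := r) hr (@cmp_proj 3 1 isT)
     (cmp2 (op := pfx) cmp_pfx (@cmp_proj 3 2 isT) (@cmp_proj 3 0 isT))).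
have hW := cmp_sumf hH.
have hW' := cmp_comp hW (Gs := [:: (fun ys => (nth 0 ys 0).+1); (fun ys => nth 0 ys 1); (fun ys => nth 0 ys 2)])
   (conj (cmp_S (@cmp_proj 3 0 isT)) (conj (@cmp_proj 3 1 isT) (conj (@cmp_proj 3 2 isT) I))).
have hS := cmp_ifz hW' (@cmp_proj 3 1 isT) (cmp_S (@cmp_proj 3 1 isT)).
have hC := cmp_rec (cmp_const 1 0) hS.
have hC' := cmp_comp hC (Gs := [:: (fun ys => nth 0 ys 1); (fun ys => nth 0 ys 0)])
   (conj (@cmp_proj 2 1 isT) (conj (@cmp_proj 2 0 isT) I)).
have hE := cmp1 (cmp_enumD p0 x0) hC'.
have := cmp_ifz (cmp2 (op := tli) cmp_tli (@cmp_proj 2 1 isT) (@cmp_proj 2 0 isT)) (cmp_const 2 0) (cmp_S hE).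
apply: cmp_ext => [[|u [|n [|]]]] //= _.
rewrite /gop; case: eqP => // _; congr (enumD _ _ _).+1.
by elim: n => //= n ->.
Qed.

Lemma sumf_ext h h' t : (forall i, i < t -> h i = h' i) -> sumf h t = sumf h' t.
Proof.
elim: t => //= t IH e; rewrite IH ?e //.
by move=> i it; apply: e; apply: ltnW.
Qed.

Lemma cnt_init f M n : n <= M -> cnt (code (mkseq f M)) n = Cf f n.
Proof.
elim: n => //= n IH nM; rewrite IH ?(ltnW nM) //.
rewrite /Wf (@sumf_ext _ (fun i => r (Cf f n) (code (mkseq f i)))) //.
move=> i; rewrite ltnS => ilt; have iM : i <= M by exact: leq_trans ilt (ltnW nM).
rewrite pfx_code; last by rewrite size_mkseq.
by rewrite /mkseq -map_take take_iota (minn_idPl _).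
Qed.

Lemma Cf_step f n : Cf f n.+1 = Cf f n \/ Cf f n.+1 = (Cf f n).+1.
Proof. by rewrite /=; case: eqP; [left | right]. Qed.

Lemma Cf_mono f n n' : n <= n' -> Cf f n <= Cf f n'.
Proof.
elim: n' => [|n' IH]; first by rewrite leqn0 => /eqP->.
rewrite leq_eqVlt => /orP[/eqP->|lt] //.
apply: leq_trans (IH lt) _; by case: (Cf_step f n') => ->.
Qed.

Lemma Cf_ivt f k N : Cf f 0 <= k -> k <= Cf f N -> exists n, Cf f n = k.
Proof.
move=> h0; elim: N => [|N IH] hN.
  by exists 0; apply/eqP; rewrite eqn_leq h0 hN.
case: (leqP k (Cf f N)) => [hk|hk]; first exact: IH.
exists N.+1; apply/eqP; rewrite eqn_leq hN andbT.
by case: (Cf_step f N) => ->; [rewrite ltnW | ].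
Qed.

Lemma Cf_surj f : (forall n, exists m, r n (code (mkseq f m)) <> 0) -> forall k, exists n, Cf f n = k.
Proof.
move=> hQ; elim => [|k [n hn]]; first by exists 0.
case: (hQ k) => m hm.
apply: (@Cf_ivt f _ (maxn n m).+1) => //.
have hk : k <= Cf f (maxn n m) by rewrite -hn Cf_mono // leq_maxl.
case: (leqP (Cf f (maxn n m)) k) => [hk'|hk']; last first.
  exact: leq_trans hk' (Cf_mono f (leqnSn _)).
have e : Cf f (maxn n m) = k by apply/eqP; rewrite eqn_leq hk hk'.
rewrite /= e; case: eqP => // hs.
have hs' : sumf (fun i => r k (code (mkseq f i))) (maxn n m).+1 = 0 := hs.
have := (proj1 (sumf_eq0P _ _) hs') m; rewrite ltnS leq_maxr => /(_ isT).
by [].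
Qed.

Lemma Cf_stay f n : sumf (fun i => r (Cf f n) (code (mkseq f i))) n.+1 = 0 -> Cf f n.+1 = Cf f n.
Proof.
move=> h.
change (Cf f n.+1) with (if sumf (fun i => r (Cf f n) (code (mkseq f i))) n.+1 == 0 then Cf f n else (Cf f n).+1).
by rewrite h eqxx.
Qed.

Lemma Cf_bound f j : (forall m, r j (code (mkseq f m)) = 0) -> forall n, Cf f n <= j.
Proof.
move=> hj; elim => // n IH.
case: (leqP j (Cf f n)) => [hjn|lt].
  have e : Cf f n = j by apply/eqP; rewrite eqn_leq IH hjn.
  rewrite Cf_stay; first by rewrite e.
  apply/sumf_eq0P => i _; rewrite e; exact: hj.
by case: (Cf_step f n) => ->; [exact: ltnW|].
Qed.

Lemma sumf_ge h t i : i < t -> h i <= sumf h t.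
Proof.
elim: t => //= t IH; rewrite ltnS leq_eqVlt => /orP[/eqP->|lt]; first exact: leq_addl.
exact: leq_trans (IH lt) (leq_addr _ _).
Qed.

End Op.

Lemma initE f m : init f m = code (mkseq f m).
Proof.
rewrite /init; have -> : pickle (mkseq f m) = CodeSeq.code (map pickle (mkseq f m)) by [].
by rewrite /code; congr CodeSeq.code; elim: (mkseq f m) => //= a l ->.
Qed.

Theorem core (A : nat -> Prop) (hA : ce A) (x0 : nat) (hx0 : A x0) (P : (nat -> nat) -> Prop) (hP : Pi02 P) :
  exists F, computable_operator F /\ forall f,
    (P f -> forall k, (exists i, F f i = k) <-> A k) /\ (~ P f -> exists Bd, forall n, F f n <= Bd).
Proof.
case: hA => p0 hp0; case: hP => r [hr hPr].
exists (Fop r p0 x0); split.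
  exists (gop r p0 x0); split; first exact: to2 (cmp_gop p0 x0 hr).
  move=> f n; split.
    move=> m; rewrite initE /gop tli_code code_eq0.
    case: eqP => [_|ne]; [by left | right].
    rewrite cnt_init // leqNgt; apply/negP => mn; apply: ne.
    by apply: drop_oversize; rewrite size_mkseq ltnW.
  exists n.+1; rewrite initE /gop tli_code code_eq0.
  case: eqP => [e|_]; last by rewrite cnt_init.
  by move: (congr1 size e); rewrite size_drop size_mkseq subSnn.
move=> f; split.
  move=> /hPr hQ k; rewrite -(enumD_range hp0 hx0); split.
    by case=> i <-; exists (Cf r f i).
  case=> t <-; case: (@Cf_surj r f _ t) => [n|n hn].
    by case: (hQ n) => m; rewrite initE => hm; exists m.
  by exists n; rewrite /Fop hn.
move=> nP.
have [j hj] : exists j, forall m, r j (code (mkseq f m)) = 0.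
  apply: NNPP => hn; apply: nP; apply/hPr => n.
  apply: NNPP => hm; apply: hn; exists n => m; apply: NNPP => hm'; apply: hm.
  by exists m; rewrite initE.
exists (sumf (enumD p0 x0) j.+1) => n.
by apply: sumf_ge; rewrite ltnS; apply: Cf_bound.
Qed.

End PilotComp.
Import PilotComp.

Import Order.TTheory GRing.Theory Num.Theory.
Import numFieldNormedType.Exports.
Local Open Scope ring_scope.

Definition gcode (i : nat) : nat := pickle (0%N, pickle ((-1)%R : rat, (i.+1)%:R : rat)).

Lemma gcode_inj : injective gcode.
Proof.
move=> i j h.
have h1 : ((0%N, pickle ((-1)%R : rat, (i.+1)%:R : rat)) : nat * nat) = (0%N, pickle ((-1)%R : rat, (j.+1)%:R : rat)) := pcan_inj pickleK h.
have h2 := congr1 snd h1.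
have h3 : ((-1)%R : rat, (i.+1)%:R : rat) = ((-1)%R, (j.+1)%:R) := pcan_inj pickleK h2.
have h4 : (i.+1)%:R = (j.+1)%:R :> rat := congr1 snd h3.
by move/eqP: h4; rewrite eqr_nat => /eqP [].
Qed.
Lemma diag_gcode (R : realType) (c : bool) (B : completeNormedModType (Scal R c)) (e : nat -> B) i :
  diagram e (gcode i).
Proof.
exists 0%N, (pickle ((-1)%R : rat, (i.+1)%:R : rat)); split => //.
rewrite /in_rat_interval /rat_interval pickleK /=.
have -> : rat_vector e 0 = 0.
  rewrite /rat_vector /formal_expr.
  have -> : (unpickle 0%N : option (seq ((rat * rat) * nat))) = Some [::] by [].
  by rewrite /= big_nil.
rewrite normr0 rmorphN1 ltrN10 /=.
by rewrite ltr0q ltr0Sn.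
Qed.

Lemma unbounded_inj (g : nat -> nat) : injective g -> forall Bd, exists i, (Bd < g i)%N.
Proof.
move=> gi Bd; apply: NNPP => hn.
have hle : forall i, (g i <= Bd)%N by move=> i; rewrite leqNgt; apply/negP => h; apply: hn; exists i.
have H : (size [seq g i | i <- iota 0 Bd.+2] <= size (iota 0 Bd.+1))%N.
  apply: uniq_leq_size; first by rewrite map_inj_uniq // iota_uniq.
  by move=> x /mapP [i _ ->]; rewrite mem_iota /= add0n ltnS hle.
by rewrite size_map !size_iota ltnn in H.
Qed.

Theorem lemma2p5 (R : realType) (c : bool)
  (B : completeNormedModType (Scal R c)) (e : nat -> B)
  (he : lin_dense e) (hcomp : computable_presentation e)
  (P : (nat -> nat) -> Prop) (hP : Pi02 P) :
  exists F : (nat -> nat) -> (nat -> nat),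
    computable_operator F /\
    forall f : nat -> nat,
      (P f -> names e (F f)) /\
      (~ P f -> ~ names_some_presentation R c (F f)).
Proof.
have [F [hF hF2]] := core hcomp (diag_gcode e 0) hP.
exists F; split => // f; split.
  by case: (hF2 f) => h _ /h.
move=> nP [B' [e' [_ hn]]].
case: (hF2 f) => _ /(_ nP) [Bd hBd].
case: (unbounded_inj gcode_inj Bd) => i hi.
case: (proj2 (hn (gcode i)) (diag_gcode e' i)) => n hn'.
by move: (hBd n); rewrite hn' leqNgt hi.
Qed.
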